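(* Let $k=1$ and let $Y$ be uniformly distributed on $\mathcal{Y}=\{y_1,\dots,y_m\}$ with $y_1\ge y_2\ge\dots\ge y_m$ distinct. Consider the ''reversal'' encoding scheme with $r=m$ symbols, $\sigma_1(y_j)=\tau_j$ and $\sigma_2(y_j)=\tau_{m+1-j}$ for all $j\in[m]$. Then (1) this scheme maximizes the eavesdropper distortion $D_{ach}(1)$ over all encoding schemes with one key bit; (2) if $\mathcal{Y}$ is regularly spaced, i.e. $\mathcal{Y}=\{y,y+d,\dots,y+(m-1)d\}$ for some $y,d\in\mathbb{R}$, then this scheme achieves $D_{ach}(1)=D_{max}$.
   Context: Single-source setting. $Y$ is a real random variable taking values in a finite set $\mathcal{Y}=\{y_1,\dots,y_m\}\subset\mathbb{R}$ of distinct values. A source and a receiver share a secret key $K$, uniform on $\{1,\dots,2^k\}$ and independent of $Y$. An encoding scheme consists of a finite set of transmission symbols $\{\tau_1,\dots,\tau_r\}$ together with, for each key value $i\in\{1,\dots,2^k\}$, an injective map $\sigma_i:\mathcal{Y}\to\{\tau_1,\dots,\tau_r\}$; the source transmits $T=\sigma_K(Y)$. An eavesdropper observes $T$ but not $K$. Her distortion is $D_{ach}(k)=\min_{\hat f}\mathbb{E}[(Y-\hat f(T))^2]$ (minimum over all functions of the observed symbol), and $D_{max}=\mathrm{var}(Y)$. *)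

(* Defs.v *)
From HB Require Import structures.
From mathcomp Require Import all_boot all_order all_algebra.
Set Implicit Arguments. Unset Strict Implicit. Unset Printing Implicit Defensive.
Import Order.TTheory GRing.Theory Num.Theory.
Local Open Scope ring_scope.

(* Values y_1..y_m are indexed by 'I_m (0-based: y_j of the paper is y (j-1)).
   One key bit (k = 1): key values indexed by 'I_2, each with probability 1/2.
   An encoding scheme with r symbols is sigma : 'I_2 -> 'I_m -> 'I_r,
   each sigma i injective. Y uniform on the m values, independent of K. *)

Definition is_scheme (m r : nat) (sigma : 'I_2 -> 'I_m -> 'I_r) : Prop :=
  forall i, injective (sigma i).

(* E[(Y - f(T))^2] where T = sigma_K(Y). *)
Definition distortion (R : realFieldType) (m r : nat) (y : 'I_m -> R)
  (sigma : 'I_2 -> 'I_m -> 'I_r) (f : 'I_r -> R) : R :=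
  \sum_(i < 2) \sum_(j < m) ((2 * m)%:R)^-1 * (y j - f (sigma i j)) ^+ 2.

Definition is_Dach (R : realFieldType) (m r : nat) (y : 'I_m -> R)
  (sigma : 'I_2 -> 'I_m -> 'I_r) (D : R) : Prop :=
  (exists f : 'I_r -> R, distortion y sigma f = D) /\
  (forall f : 'I_r -> R, D <= distortion y sigma f).

Definition meanY (R : realFieldType) (m : nat) (y : 'I_m -> R) : R :=
  \sum_(j < m) (m%:R)^-1 * y j.

(* D_max = var(Y) for Y uniform on the y j. *)
Definition varY (R : realFieldType) (m : nat) (y : 'I_m -> R) : R :=
  \sum_(j < m) (m%:R)^-1 * (y j - meanY y) ^+ 2.

Definition reversal (m : nat) : 'I_2 -> 'I_m -> 'I_m :=
  fun (i : 'I_2) (j : 'I_m) => if i == ord0 then j else rev_ord j.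
Arguments reversal : clear implicits.

(* Main.v *)
Require Import Defs.
From HB Require Import structures.
From mathcomp Require Import all_boot all_order all_algebra.
From mathcomp Require Import ring lra zify.
Import Order.TTheory GRing.Theory Num.Theory.
Local Open Scope ring_scope.

Lemma quad_min (R : realFieldType) (I : finType) (P : pred I) (z : I -> R) (x : R) :
  \sum_(k | P k) (z k - (\sum_(k | P k) z k) / \sum_(k | P k) (1:R))^+2
   <= \sum_(k | P k) (z k - x)^+2.
Proof.
set N := \sum_(k | P k) (1:R).
set xs := (\sum_(k | P k) z k) / N.
case: (pickP P) => [k0 Pk0 | P0]; last by rewrite !big_pred0.
have N0 : 0 < N.
  rewrite /N (bigD1 k0) //=.
  have : 0 <= \sum_(i | P i && (i != k0)) (1:R) by apply: sumr_ge0 => i _; exact: ler01.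
  lra.
have hS : \sum_(k|P k) z k = xs * N by rewrite /xs mulfVK // gt_eqF.
have expand : forall v, \sum_(k|P k) (z k - v)^+2
    = \sum_(k|P k) z k ^+2 - 2 * v * \sum_(k|P k) z k + v^+2 * N.
  move=> v; rewrite /N.
  rewrite (eq_bigr (fun k => (z k ^+ 2 - 2 * v * z k) + v ^+ 2 * 1)); last by move=> k _; ring.
  by rewrite big_split sumrB /= -!mulr_sumr.
rewrite !expand hS -subr_ge0.
have -> : \sum_(k | P k) z k ^+ 2 - 2 * x * (xs * N) + x ^+ 2 * N -
  (\sum_(k | P k) z k ^+ 2 - 2 * xs * (xs * N) + xs ^+ 2 * N) = N * (x - xs)^+2 by ring.
by apply: mulr_ge0; [exact: ltW | exact: sqr_ge0].
Qed.

Lemma distortion_part (R : realFieldType) m r (y : 'I_m -> R) (sigma : 'I_2 -> 'I_m -> 'I_r) f :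
  distortion y sigma f = ((2 * m)%:R)^-1 *
    \sum_(t : 'I_r) \sum_(p : 'I_2 * 'I_m | sigma p.1 p.2 == t) (y p.2 - f t)^+2.
Proof.
rewrite /distortion pair_big /= -mulr_sumr; congr (_ * _).
rewrite (partition_big (fun p : 'I_2 * 'I_m => sigma p.1 p.2) xpredT) //=.
apply: eq_bigr => t _; apply: eq_bigr => p /eqP ->; done.
Qed.

Definition fstar (R : realFieldType) m r (y : 'I_m -> R) (sigma : 'I_2 -> 'I_m -> 'I_r) (t : 'I_r) : R :=
  (\sum_(p : 'I_2 * 'I_m | sigma p.1 p.2 == t) y p.2) / \sum_(p : 'I_2 * 'I_m | sigma p.1 p.2 == t) (1:R).
Arguments fstar {R m r}.

Lemma is_Dach_fstar (R : realFieldType) m r (y : 'I_m -> R) (sigma : 'I_2 -> 'I_m -> 'I_r) :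
  is_Dach y sigma (distortion y sigma (fstar y sigma)).
Proof.
split; first by exists (fstar y sigma).
move=> f; rewrite !distortion_part; apply: ler_wpM2l; first by rewrite invr_ge0 ler0n.
apply: ler_sum => t _; rewrite /fstar; exact: quad_min.
Qed.

Lemma rev_lb (R : realFieldType) m (y : 'I_m -> R) f :
  \sum_(j < m) ((2 * m)%:R)^-1 * ((y j - y (rev_ord j))^+2 / 2) <= distortion y (reversal m) f.
Proof.
rewrite /distortion big_ord_recl big_ord1 /reversal /=.
rewrite [X in _ <= _ + X](reindex_inj rev_ord_inj) /= -big_split /=.
apply: ler_sum => j _; rewrite rev_ordK -mulrDr; apply: ler_wpM2l; first by rewrite invr_ge0 ler0n.
set a := y j; set b := y (rev_ord j); set x := f j.
have := sqr_ge0 (a + b - 2 * x); nra.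
Qed.

Fixpoint phi0 {R : realFieldType} (Y : nat -> R) (n k : nat) : R :=
  match k with
  | 0%N => 0
  | k'.+1 => phi0 Y n k' + 2 * (Y k' - Y k'.+1) * Y (n - k')%N
  end.

Definition phi {R : realFieldType} (Y : nat -> R) (n k : nat) : R :=
  phi0 Y n k - Y 0%N * Y n - phi0 Y n n / 2.

Definition Ff {R : realFieldType} (Y : nat -> R) (n a b : nat) : R :=
  phi Y n a + phi Y n b + 2 * Y a * Y b.

Lemma F_step (R : realFieldType) (Y : nat -> R) n a b :
  Ff Y n a.+1 b - Ff Y n a b = 2 * (Y a - Y a.+1) * (Y (n - a)%N - Y b).
Proof. rewrite /Ff /phi /=; ring. Qed.

Lemma F_rev (R : realFieldType) (Y : nat -> R) n a : (a <= n)%N -> Ff Y n a (n - a) = 0.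
Proof.
elim: a => [_|a IH ha].
  rewrite subn0 /Ff /phi /=.
  have h2 : (2:R) != 0 by rewrite pnatr_eq0.
  by field.
have := IH (ltnW ha) => H.
have hk : (n - a = (n - a.+1).+1)%N by lia.
have hk2 : (n - (n - a.+1) = a.+1)%N by lia.
rewrite -H /Ff /phi hk /= hk2 -hk; ring.
Qed.

Lemma F_nonneg (R : realFieldType) (Y : nat -> R) n
  (hs : forall i j, (i <= j)%N -> (j <= n)%N -> Y j <= Y i) a b :
  (a <= n)%N -> (b <= n)%N -> 0 <= Ff Y n a b.
Proof.
move=> ha hb.
rewrite -(@F_rev R Y n (n - b)) ?leq_subr //.
have -> : (n - (n - b) = b)%N by lia.
have gap : forall k, (k.+1 <= n)%N -> 0 <= Y k - Y k.+1.
  by move=> k hk; rewrite subr_ge0; apply: hs.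
case: (leqP a (n - b)) => hab.
- (* walk up from a to n-b, F decreasing *)
  have : forall d a', (a' + d = n - b)%N -> Ff Y n (n - b) b <= Ff Y n a' b.
    elim=> [a' h|d IH a' h]; first by rewrite addn0 in h; rewrite h.
    apply: (le_trans (IH a'.+1 _)); first by lia.
    rewrite -subr_ge0 -opprB oppr_ge0 F_step.
    apply: mulr_ge0_le0; first by apply: mulr_ge0 => //; apply: gap; lia.
    by rewrite subr_le0; apply: hs; lia.
  by move/(_ (n - b - a)%N a); apply; lia.
- have : forall d, (n - b + d <= n)%N -> Ff Y n (n - b) b <= Ff Y n (n - b + d) b.
    elim=> [|d IH h]; first by rewrite addn0.
    apply: (le_trans (IH _)); first by lia.
    rewrite -subr_ge0 addnS F_step.
    apply: mulr_ge0; first by apply: mulr_ge0 => //; apply: gap; lia.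
    by rewrite subr_ge0; apply: hs; lia.
  move/(_ (a - (n - b))%N); have -> : (n - b + (a - (n - b)) = a)%N by lia.
  by apply; lia.
Qed.

Lemma cert (R : realFieldType) n (y : 'I_n.+1 -> R)
  (hdec : forall i j : 'I_n.+1, (i <= j)%N -> y j <= y i) :
  exists u : 'I_n.+1 -> R, (forall a, 0 <= u a) /\
    (forall a b, (y a - y b)^+2 <= u a + u b) /\
    (forall a, u a + u (rev_ord a) = (y a - y (rev_ord a))^+2).
Proof.
pose Y k := y (inord k).
have hY : forall a : 'I_n.+1, y a = Y a by move=> a; rewrite /Y inord_val.
have hs : forall i j, (i <= j)%N -> (j <= n)%N -> Y j <= Y i.
  move=> i j hij hj; apply: hdec; rewrite !inordK //; lia.
exists (fun a : 'I_n.+1 => Y a ^+2 + phi Y n a).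
have key : forall a b : 'I_n.+1,
    (y a - y b)^+2 + Ff Y n a b = (Y a ^+2 + phi Y n a) + (Y b ^+2 + phi Y n b).
  by move=> a b; rewrite !hY /Ff; ring.
have hab : forall a b : 'I_n.+1, (y a - y b)^+2 <= (Y a ^+2 + phi Y n a) + (Y b ^+2 + phi Y n b).
  move=> a b; rewrite -key lerDl; apply: F_nonneg => //; rewrite -ltnS; exact: ltn_ord.
split; [|split].
- move=> a; have := hab a a; rewrite subrr expr0n /=; lra.
- exact: hab.
- move=> a; rewrite -key.
  have hr : nat_of_ord (rev_ord a) = (n - a)%N by rewrite /= subSS.
  rewrite hr F_rev ?addr0 //; rewrite -ltnS; exact: ltn_ord.
Qed.

Definition gmid {R : realFieldType} {m r : nat} (y : 'I_m -> R) (s0 s1 : 'I_m -> 'I_r) (t : 'I_r) : R :=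
  match [pick a | s0 a == t], [pick b | s1 b == t] with
  | Some a, Some b => (y a + y b) / 2
  | Some a, None => y a
  | None, Some b => y b
  | None, None => 0
  end.

Lemma sum_inj_at (R : realFieldType) m r (h : 'I_m -> 'I_r) (hi : injective h) a0 (v : 'I_m -> R) :
  \sum_a ((h a == h a0)%:R * v a) = v a0.
Proof.
rewrite (bigD1 a0) //= eqxx mul1r big1 ?addr0 // => a ne.
by rewrite (inj_eq hi) (negbTE ne) mul0r.
Qed.

Lemma sum_inj_le1 (R : realFieldType) m r (h : 'I_m -> 'I_r) (hi : injective h) t :
  \sum_a ((h a == t)%:R : R) <= 1.
Proof.
case: (pickP (fun a => h a == t)) => [a0 /eqP <- | H].
  have -> : \sum_a ((h a == h a0)%:R : R) = \sum_a ((h a == h a0)%:R * 1).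
    by apply: eq_bigr => a _; rewrite mulr1.
  by rewrite sum_inj_at.
by rewrite big1 // => a _; rewrite H.
Qed.

Lemma V_le (R : realFieldType) m r (s0 s1 : 'I_m -> 'I_r) (h0 : injective s0) (u : 'I_m -> R)
  (hu0 : forall a, 0 <= u a) :
  \sum_a \sum_b ((s1 b == s0 a)%:R * u b) <= \sum_b u b.
Proof.
rewrite exchange_big /=; apply: ler_sum => b _.
rewrite -mulr_suml; apply: ler_piMl => //.
have -> : \sum_a ((s1 b == s0 a)%:R : R) = \sum_a ((s0 a == s1 b)%:R : R).
  by apply: eq_bigr => a _; rewrite eq_sym.
exact: sum_inj_le1.
Qed.

Lemma scheme_bound (R : realFieldType) m r (y : 'I_m -> R) (u : 'I_m -> R)
  (hu0 : forall a, 0 <= u a) (hu : forall a b, (y a - y b)^+2 <= u a + u b)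
  (hur : forall a, u a + u (rev_ord a) = (y a - y (rev_ord a))^+2)
  (sigma : 'I_2 -> 'I_m -> 'I_r) (hs : is_scheme sigma) :
  exists g, distortion y sigma g <=
    \sum_(j < m) ((2 * m)%:R)^-1 * ((y j - y (rev_ord j))^+2 / 2).
Proof.
set s0 := sigma ord0. set s1 := sigma (lift ord0 ord0).
have h0 : injective s0 := hs _.
have h1 : injective s1 := hs _.
exists (gmid y s0 s1).
set c := ((2 * m)%:R)^-1 : R.
have c0 : 0 <= c by rewrite invr_ge0 ler0n.
have RHS : \sum_(j < m) c * ((y j - y (rev_ord j))^+2 / 2) = c * \sum_j u j.
  under eq_bigr do rewrite -hur.
  rewrite -mulr_sumr; congr (c * _).
  rewrite -mulr_suml big_split /= [X in (_ + X) / 2](reindex_inj rev_ord_inj) /=.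
  under [X in (_ + X) / 2]eq_bigr do rewrite rev_ordK.
  lra.
rewrite RHS /distortion big_ord_recl big_ord1 -/s0 -/s1 -!mulr_sumr -mulrDr.
apply: ler_wpM2l => //.
have V0ge : forall a, 0 <= \sum_b ((s1 b == s0 a)%:R * u b).
  by move=> a; apply: sumr_ge0 => b _; apply: mulr_ge0.
have V1ge : forall b, 0 <= \sum_a ((s0 a == s1 b)%:R * u a).
  by move=> b; apply: sumr_ge0 => a _; apply: mulr_ge0.
have T0 : forall a, (y a - gmid y s0 s1 (s0 a))^+2 <= (u a + \sum_b ((s1 b == s0 a)%:R * u b)) / 4.
  move=> a; rewrite /gmid.
  case: (pickP [pred a' | s0 a' == s0 a]) => [a' /= /eqP Ha' | H]; last first.
    by have := H a; rewrite /= eqxx.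
  have ea : a' = a := h0 _ _ Ha'.
  subst a'.
  case: (pickP [pred b | s1 b == s0 a]) => [b /= /eqP Hb | H].
    rewrite -Hb sum_inj_at //.
    have := hu a b; nra.
  rewrite subrr expr0n /=; have := V0ge a; have := hu0 a; lra.
have T1 : forall b, (y b - gmid y s0 s1 (s1 b))^+2 <= (u b + \sum_a ((s0 a == s1 b)%:R * u a)) / 4.
  move=> b; rewrite /gmid.
  case: (pickP [pred a | s0 a == s1 b]) => [a /= /eqP Ha | H].
    case: (pickP [pred b' | s1 b' == s1 b]) => [b' /= /eqP Hb' | H]; last first.
      by have := H b; rewrite /= eqxx.
    have eb : b' = b := h1 _ _ Hb'.
    subst b'.
    rewrite -Ha sum_inj_at //.
    have := hu a b; nra.
  case: (pickP [pred b' | s1 b' == s1 b]) => [b' /= /eqP Hb' | H']; last first.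
    by have := H' b; rewrite /= eqxx.
  have eb : b' = b := h1 _ _ Hb'.
  subst b'.
  rewrite subrr expr0n /=; have := V1ge b; have := hu0 b; lra.
apply: le_trans (lerD (ler_sum _ (fun a _ => T0 a)) (ler_sum _ (fun b _ => T1 b))) _.
rewrite -!mulr_suml !big_split /=.
have := @V_le R m r s0 s1 h0 u hu0; have := @V_le R m r s1 s0 h1 u hu0.
lra.
Qed.

Lemma regular_sym (R : realFieldType) n (y : 'I_n.+1 -> R) (hinj : injective y)
  (hdec : forall i j : 'I_n.+1, (i <= j)%N -> y j <= y i) (y0 d : R)
  (hset : forall x : R, (exists j : 'I_n.+1, x = y j) <-> (exists i : 'I_n.+1, x = y0 + i%:R * d)) :
  forall j, y (rev_ord j) = (2 * y0 + n%:R * d) - y j.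
Proof.
set c := 2 * y0 + n%:R * d.
have ex : forall j, exists k, y k = c - y j.
  move=> j; have [i hi] := (hset (y j)).1 (ex_intro _ j erefl).
  have [k hk] := (hset (y0 + (rev_ord i : nat)%:R * d)).2 (ex_intro _ (rev_ord i) erefl).
  exists k; rewrite -hk hi /= subSS natrB; last by rewrite -ltnS ltn_ord.
  rewrite /c; ring.
pose G j := odflt j [pick k | y k == c - y j].
have hG : forall j, y (G j) = c - y j.
  move=> j; rewrite /G; case: pickP => [k /eqP -> //| H].
  by have [k hk] := ex j; have := H k; rewrite /= hk eqxx.
have strict : forall i j : 'I_n.+1, (i < j)%N -> (G j < G i)%N.
  move=> i j hij.
  have yij : y j < y i.
    rewrite lt_neqAle hdec ?andbT ?(ltnW hij) //.
    apply/negP => /eqP /hinj E; by rewrite E ltnn in hij.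
  rewrite ltnNge; apply/negP => hle.
  have := hdec _ _ hle; rewrite !hG; lra.
pose Gn k := nat_of_ord (G (inord k)).
have st : forall k, (k < n)%N -> (Gn k.+1 < Gn k)%N.
  move=> k hk; apply: strict; rewrite !inordK //; lia.
have c1 : forall k, (k <= n)%N -> (Gn k <= n - k)%N.
  elim=> [_|k IH hk]; first by rewrite subn0 -ltnS ltn_ord.
  have := st k hk; have := IH (ltnW hk); lia.
have c2 : forall e, (e <= n)%N -> (e <= Gn (n - e))%N.
  elim=> [//|e IH he].
  have := IH (ltnW he); have := st (n - e.+1)%N ltac:(lia).
  have -> : ((n - e.+1).+1 = n - e)%N by lia.
  lia.
move=> j.
have Gj : G j = rev_ord j.
  apply: val_inj => /=; rewrite subSS.
  have hj : (j <= n)%N by rewrite -ltnS ltn_ord.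
  have e1 := c1 j hj; have e2 := c2 (n - j)%N (leq_subr _ _).
  rewrite (_ : (n - (n - j) = j)%N) in e2; last by lia.
  rewrite /Gn inord_val in e1 e2; lia.
by rewrite -Gj hG.
Qed.

Lemma part2 (R : realFieldType) m (y : 'I_m -> R) (hm : (0 < m)%N) (c : R)
  (hsym : forall j, y (rev_ord j) = c - y j) : is_Dach y (reversal m) (varY y).
Proof.
have m0 : (m%:R : R) != 0 by rewrite pnatr_eq0 -lt0n.
have m20 : ((2 * m)%:R : R) != 0 by rewrite pnatr_eq0 muln_eq0 negb_or /= -lt0n.
have h2 : (2 : R) != 0 by rewrite pnatr_eq0.
have hsum : \sum_(j < m) y j = m%:R * (c / 2).
  have : \sum_(j < m) y j + \sum_(j < m) y j = m%:R * c.
    rewrite [X in _ + X = _](reindex_inj rev_ord_inj) /= -big_split /=.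
    under eq_bigr do rewrite hsym.
    have -> : \sum_(i < m) (y i + (c - y i)) = \sum_(i < m) c by apply: eq_bigr => i _; ring.
    by rewrite sumr_const card_ord mulr_natl.
  move=> H; have -> : m%:R * (c / 2) = (m%:R * c) / 2 by field.
  by rewrite -H; field.
have hmean : meanY y = c / 2.
  by rewrite /meanY -mulr_sumr hsum; field.
split.
- exists (fun _ => c / 2).
  rewrite /distortion /varY hmean big_ord_recl big_ord1 -big_split /=.
  apply: eq_bigr => j _; rewrite natrM; field; by rewrite pnatr_eq0 -lt0n.
- move=> f; apply: (le_trans _ (@rev_lb R m y f)).
  rewrite /varY hmean le_eqVlt; apply/orP; left; apply/eqP.
  apply: eq_bigr => j _; rewrite hsym natrM; field; by rewrite pnatr_eq0 -lt0n.
Qed.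

Theorem theorem3 (R : realFieldType) (m : nat) (y : 'I_m -> R)
  (hm : (0 < m)%N) (hinj : injective y)
  (hdec : forall i j : 'I_m, (i <= j)%N -> y j <= y i) :
  (exists Drev : R, is_Dach y (reversal m) Drev /\
     forall (r : nat) (sigma : 'I_2 -> 'I_m -> 'I_r), is_scheme sigma ->
       exists D : R, is_Dach y sigma D /\ D <= Drev)
  /\
  ((exists y0 d : R, forall x : R,
       (exists j : 'I_m, x = y j) <-> (exists i : 'I_m, x = y0 + i%:R * d)) ->
   is_Dach y (reversal m) (varY y)).
Proof.
move: y hinj hdec hm; case: m => [//|n] y hinj hdec _.
have [u [hu0 [hu hur]]] := @cert R n y hdec.
split.
- exists (distortion y (reversal n.+1) (fstar y (reversal n.+1))).
  split; first exact: (@is_Dach_fstar R _ _ y).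
  move=> r sigma hs.
  exists (distortion y sigma (fstar y sigma)); split; first exact: (@is_Dach_fstar R _ _ y).
  have [g hg] := @scheme_bound R _ _ y u hu0 hu hur sigma hs.
  apply: le_trans ((@is_Dach_fstar R _ _ y sigma).2 g) _.
  apply: le_trans hg _; exact: (@rev_lb R _ y).
- move=> [y0 [d hset]].
  exact: (@part2 R _ y (ltn0Sn n) _ (@regular_sym R n y hinj hdec y0 d hset)).
Qed.
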